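(* Let $G = (V, E, b, c)$ be a weighted hypergraph with $n$ vertices in which every vertex belongs to some edge, and let $\mathtt{OPT}$ be a minimum-cost edge cover of $G$. For any $0 \leq \epsilon < 1$, algorithm SSSC outputs a $(1-\epsilon)$-cover certificate for $G$ whose image has cost $O\left( \min\{ 1/\epsilon, \sqrt{n} \} \cdot c(\mathtt{OPT}) \right)$.
   Context: A weighted hypergraph $G = (V, E, b, c)$ has vertex set $V$ ($|V| = n$), a multiset $E$ of non-empty edges $e \subseteq V$, benefits $b : V \to \mathbb{Q}_{>0}$ and costs $c : E \to \mathbb{Q}_{>0}$; $b(U) = \sum_{v \in U} b(v)$, $c(F) = \sum_{e \in F} c(e)$. An edge cover is a set $F \subseteq E$ whose union is $V$. A $\delta$-cover certificate for $G$ is a partial function $\chi$ from $V$ to edge identifiers such that (1) if $v \in \mathrm{Dom}(\chi)$ and $\chi(v) = \mathrm{id}(e)$ then $v \in e$, and (2) $b(\mathrm{Dom}(\chi)) \geq \delta \cdot b(V)$; $\mathrm{Im}(\chi)$ is the set of edges whose identifiers are values of $\chi$. Convention: $\min\{1/x, y\} = y$ when $x = 0$. Edges arrive in a stream $e_0, e_1, \dots$ with unique identifiers $\mathrm{id}(e)$. Procedure COVER (on a weighted hypergraph with benefit function $\beta$) maintains for each $v$ a variable $\mathrm{eid}(v)$ (initially NULL) and an integer $\mathrm{eff}(v)$ (initially $-\infty$); $\mathrm{eff}_t(v)$ is its value just before $e_t$ is processed. For $T \subseteq e_t$, $\mathrm{lev}_t(T) = \lceil \lg(\beta(T)/c(e_t))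 \rceil$ ($\lg$ = base-2 logarithm), and $T$ is effective at time $t$ if $\mathrm{lev}_t(T) > \mathrm{eff}_t(v)$ for all $v \in T$. When $e_t$ arrives, COVER picks an effective $T \subseteq e_t$ of largest $\beta(T)$ and for every $v \in T$ sets $\mathrm{eid}(v) \leftarrow \mathrm{id}(e_t)$, $\mathrm{eff}(v) \leftarrow \mathrm{lev}_t(T)$. Algorithm SSSC runs in parallel over the stream: (P1) COVER with benefits $b$, with final values $\mathrm{eid}_\infty(\cdot), \mathrm{eff}_\infty(\cdot)$; (P2) COVER with all benefits equal to $1$, with final values $\mathrm{eid}^{\mathbf{1}}_\infty(\cdot), \mathrm{eff}^{\mathbf{1}}_\infty(\cdot)$; (P3) for each $v$, $\mathrm{emin}(v)$ = identifier of a minimum-cost edge containing $v$ seen so far; (P4) stores $b(v)$ for each $v$. At the end, given $\epsilon$: if $\epsilon \geq 1/\sqrt{n}$, let $r^*$ be the largest integer with $b(I(\leq r^* )) \leq \epsilon b(V)$ where $I(\leq r) = \{ v : \mathrm{eff}_\infty(v) \leq r \}$, and output the partial function mapping each $v \in V \setminus I(\leq r^* )$ to $\mathrm{eid}_\infty(v)$. If $\epsilon < 1/\sqrt{n}$, let $r^*$ be the largest integer with $|I^{\mathbf{1}}(\leq r^* )| \leq \sqrt{n}$ where $I^{\mathbf{1}}(\leq r) = \{ v : \mathrm{eff}^{\mathbf{1}}_\infty(v) \leq r \}$, and output the total function mapping each $v \in V \setminus I^{\mathbf{1}}(\leq r^* )$ to $\mathrm{eid}^{\mathbf{1}}_\infty(v)$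 and each $v \in I^{\mathbf{1}}(\leq r^* )$ to $\mathrm{emin}(v)$. *)

(* Defs.v *)
(* Data (benefits, costs, epsilon) are rationals as in the
   paper; the final bound, which involves sqrt n, is stated in the real closed
   field [realalg] (rationals embedded by [ratr]). *)
From HB Require Import structures.
From mathcomp Require Import all_boot all_order all_algebra.
From mathcomp Require Import realalg.
Set Implicit Arguments. Unset Strict Implicit. Unset Printing Implicit Defensive.
Import Order.TTheory GRing.Theory Num.Theory.
Local Open Scope ring_scope.

(* A weighted hypergraph given as a stream: vertices are the finite type V
   (n = #|V|), benefits b : V -> rat, edges e_0,...,e_{m-1} with vertex sets
   ev t and costs cost t.  The identifier of e_t is t.  The multiset E is the
   collection of these m edges. *)

Section Defs.
Variables (V : finType) (m : nat) (ev : nat -> {set V}) (cost : nat -> rat).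

Definition wsum (beta : V -> rat) (U : {set V}) : rat := \sum_(v in U) beta v.

Definition ecost (F : {set 'I_m}) : rat := \sum_(t in F) cost t.

Definition is_edge_cover (F : {set 'I_m}) : Prop :=
  forall v : V, exists2 t : 'I_m, t \in F & v \in ev t.

Definition is_min_edge_cover (F : {set 'I_m}) : Prop :=
  is_edge_cover F /\ forall F', is_edge_cover F' -> ecost F <= ecost F'.

Definition dom (chi : V -> option nat) : {set V} := [set v | chi v != None].
Definition img (chi : V -> option nat) : {set 'I_m} :=
  [set t : 'I_m | [exists v, chi v == Some (val t)]].

Definition is_cover_cert (b : V -> rat) (delta : rat) (chi : V -> option nat)
  : Prop :=
  (forall v t, chi v = Some t -> (t < m)%N /\ v \in ev t) /\
  delta * wsum b setT <= wsum b (dom chi).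

Definition is_ceil_lg (x : rat) (k : int) : Prop :=
  (2%:Q) ^ (k - 1) < x /\ x <= (2%:Q) ^ k.

(* eff values: None stands for -infinity *)
Definition eff_lt (e : option int) (l : int) : bool :=
  if e is Some k then k < l else true.
Definition eff_le (e : option int) (l : int) : bool :=
  if e is Some k then k <= l else true.

(* state of COVER: (eid, eff) *)
Definition cstate := ((V -> option nat) * (V -> option int))%type.
Definition cinit : cstate := (fun _ => None, fun _ => None).

Definition is_lev (beta : V -> rat) (t : nat) (T : {set V}) (l : int) : Prop :=
  is_ceil_lg (wsum beta T / cost t) l.

Definition effective (beta : V -> rat) (st : cstate) (t : nat)
  (T : {set V}) (l : int) : Prop :=
  T != set0 /\ T \subset ev t /\ is_lev beta t T l /\
  forall v, v \in T -> eff_lt (st.2 v) l.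

Definition cupdate (st : cstate) (t : nat) (T : {set V}) (l : int) : cstate :=
  (fun v => if v \in T then Some t else st.1 v,
   fun v => if v \in T then Some l else st.2 v).

(* processing of e_t: pick an effective T of largest beta(T) (any tie
   breaking); if only the empty set is effective nothing changes *)
Definition cover_step (beta : V -> rat) (t : nat) (st st' : cstate) : Prop :=
  (exists T l, effective beta st t T l /\
     (forall T' l', effective beta st t T' l' -> wsum beta T' <= wsum beta T) /\
     st' = cupdate st t T l)
  \/ ((forall T l, ~ effective beta st t T l) /\ st' = st).

Inductive cover_reach (beta : V -> rat) : nat -> cstate -> Prop :=
| CR0 : cover_reach beta 0 cinit
| CRS k st st' : cover_reach beta k st -> (k < m)%N -> cover_step beta k st st' ->
                 cover_reach beta k.+1 st'.

Definition cover_run (beta : V -> rat) (st : cstate) : Prop :=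
  cover_reach beta m st.

Definition emin_spec (emin : V -> option nat) : Prop :=
  forall v, exists t, emin v = Some t /\ (t < m)%N /\ v \in ev t /\
     forall t', (t' < m)%N -> v \in ev t' -> cost t <= cost t'.

Definition Ile (st : cstate) (r : int) : {set V} :=
  [set v | eff_le (st.2 v) r].

Definition sqrtn : realalg := Num.sqrt (#|V|%:R).

(* chi is the output of SSSC for epsilon, given the final states of P1
   (st1, benefits b), P2 (st2, unit benefits) and P3 (emin) *)
Definition sssc_output (b : V -> rat) (eps : rat) (st1 st2 : cstate)
  (emin : V -> option nat) (chi : V -> option nat) : Prop :=
  if 1 / sqrtn <= ratr eps then
    exists rstar : int,
      wsum b (Ile st1 rstar) <= eps * wsum b setT /\
      (forall r, wsum b (Ile st1 r) <= eps * wsum b setT -> r <= rstar) /\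
      chi = (fun v => if v \in Ile st1 rstar then None else st1.1 v)
  else
    exists rstar : int,
      (#|Ile st2 rstar|%:R <= sqrtn) /\
      (forall r, (#|Ile st2 r|%:R <= sqrtn) -> r <= rstar) /\
      chi = (fun v => if v \in Ile st2 rstar then emin v else st2.1 v).

End Defs.

(* min{1/eps, sqrt n}, with min{1/0, y} = y *)
Definition min_inv_sqrt (eps : rat) (n : nat) : realalg :=
  if eps == 0 then Num.sqrt (n%:R) else Num.min (ratr eps)^-1 (Num.sqrt (n%:R)).

(* Main.v *)
Require Import Defs.
From HB Require Import structures.
From mathcomp Require Import all_boot all_order all_algebra.
From mathcomp Require Import realalg.
From mathcomp Require Import zify ring lra.
Import Order.TTheory GRing.Theory Num.Theory.
Local Open Scope ring_scope.

Lemma two_gt1 : 1 < 2%:Q. Proof. by rewrite ltr1n. Qed.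
Lemma two_neq0 : 2%:Q != 0. Proof. by rewrite pnatr_eq0. Qed.
Lemma p2D (a b : int) : 2%:Q ^ (a + b) = 2%:Q ^ a * 2%:Q ^ b.
Proof. exact: expfzDr two_neq0. Qed.
Lemma p2gt0 (a : int) : 0 < 2%:Q ^ a.
Proof. by apply: exprz_gt0; rewrite ltr0n. Qed.
Lemma p2le (a b : int) : (2%:Q ^ a <= 2%:Q ^ b) = (a <= b).
Proof. exact: (ler_eXz2l two_gt1). Qed.
Lemma p2lt (a b : int) : (2%:Q ^ a < 2%:Q ^ b) = (a < b).
Proof. exact: (ltr_eXz2l two_gt1). Qed.
Lemma p2_0 : 2%:Q ^ (0:int) = 1. Proof. by []. Qed.
Lemma p2_1 : 2%:Q ^ (1:int) = 2. Proof. by rewrite expr1z. Qed.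
Lemma p2_nat (n : nat) : 2%:Q ^ (n%:Z) = 2 ^+ n. Proof. by []. Qed.


Lemma nat_lt_p2 (x : rat) (n : nat) : x < n%:R -> x < 2%:Q ^ (n%:Z).
Proof.
move=> h; apply: (lt_trans h); rewrite p2_nat -natrX ltr_nat.
exact: ltn_expl.
Qed.

Lemma ceil_lg_ex {x : rat} : 0 < x -> exists k, is_ceil_lg x k.
Proof.
move=> x0.
pose N := (Num.bound x + Num.bound x^-1)%N.
have hN1 : x < 2%:Q ^ (N%:Z).
  apply: nat_lt_p2; apply: (lt_le_trans (archi_boundP (ltW x0))).
  rewrite /N natrD lerDl; exact: ler0n.
have hN2 : x^-1 < 2%:Q ^ (N%:Z).
  apply: nat_lt_p2; apply: (lt_le_trans (archi_boundP _)).
    by rewrite invr_ge0 ltW.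
  rewrite /N natrD lerDr; exact: ler0n.
pose P j := x <= 2%:Q ^ (j%:Z - N%:Z).
have ex : exists j, P j.
  exists (N + N)%N; rewrite /P PoszD addrK; exact: ltW.
case: (ex_minnP ex) => j0 Pj0 minj.
case: j0 Pj0 minj => [|j1] Pj0 minj.
  exfalso; move: Pj0; rewrite /P sub0r -invr_expz => h.
  have : 2%:Q ^ (N%:Z) <= x^-1.
    by rewrite -(invrK (2%:Q ^ _)) lef_pV2 ?posrE ?invr_gt0 ?p2gt0.
  by rewrite leNgt hN2.
exists (j1.+1%:Z - N%:Z); split; last by [].
have nP : ~~ P j1 by apply/negP => /minj; rewrite ltnn.
move: nP; rewrite /P -ltNge => h.
suff -> : (j1.+1%:Z - N%:Z - 1) = (j1%:Z - N%:Z) by [].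
by rewrite -addn1 PoszD addrAC addrK.
Qed.


Lemma effle_lt (e : option int) r l : eff_le e r -> r < l -> eff_lt e l.
Proof. case: e => [k|] //= h1 h2; exact: le_lt_trans h1 h2. Qed.
Lemma efflt_le (e : option int) l l' : eff_lt e l -> l <= l' -> eff_lt e l'.
Proof. case: e => [k|] //= h1 h2; exact: lt_le_trans h1 h2. Qed.

Lemma lev_mono {x y l l'} : is_ceil_lg x l -> is_ceil_lg y l' -> x <= y -> l <= l'.
Proof.
move=> [h1 _] [_ h2] hxy.
have : 2%:Q ^ (l - 1) < 2%:Q ^ l'.
  exact: (lt_le_trans h1 (le_trans hxy h2)).
rewrite p2lt; lia.
Qed.

Lemma two_pow_half {a b : int} : a < b -> 2%:Q ^ (1 - b) + 2%:Q ^ (1 - b) <= 2%:Q ^ (1 - a).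
Proof.
move=> ab.
have -> : 2%:Q ^ (1 - b) + 2%:Q ^ (1 - b) = 2%:Q ^ (1 + (1 - b)).
  by rewrite [RHS]p2D p2_1 mulr_natl mulr2n.
rewrite p2le; lia.
Qed.

Definition gfun (e : option int) (r : int) : rat :=
  if e is Some k then (if r < k then 2%:Q ^ (1 - r) - 2%:Q ^ (1 - k) else 0) else 0.

Lemma gfun_ge0 e r : 0 <= gfun e r.
Proof.
case: e => [k|] //=; case: ifP => // rk.
rewrite subr_ge0 p2le; lia.
Qed.

Lemma gfun_le e r : gfun e r <= 2%:Q ^ (1 - r).
Proof.
case: e => [k|] /=; last exact: ltW (p2gt0 _).
case: ifP => _; last exact: ltW (p2gt0 _).
rewrite lerBlDr lerDl; exact: ltW (p2gt0 _).
Qed.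

Lemma gfun_step e r l : eff_lt e l ->
  gfun e r + (if r < l then 2%:Q ^ (1 - l) else 0) <= gfun (Some l) r.
Proof.
case: e => [k|] /= hl; case: (ltP r l) => rl.
- case: ifP => rk.
  + move: (two_pow_half hl); lra.
  + move: (two_pow_half rl); lra.
- have -> : (r < k) = false by apply/negbTE; rewrite -leNgt; exact: le_trans (ltW hl) rl.
  by rewrite addr0.
- move: (two_pow_half rl); lra.
- by rewrite addr0.
Qed.

Set Implicit Arguments. Unset Strict Implicit.

Section Inv.
Variables (V : finType) (m : nat) (ev : nat -> {set V}) (cost : nat -> rat)
  (beta : V -> rat).
Hypothesis hb : forall v, 0 < beta v.
Hypothesis hc : forall t, (t < m)%N -> 0 < cost t.

Definition imgGt (st : cstate V) (r : int) : {set 'I_m} :=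
  [set t : 'I_m | [exists v, (st.1 v == Some (val t)) && ~~ eff_le (st.2 v) r]].
Definition pot (st : cstate V) (r : int) : rat := \sum_v beta v * gfun (st.2 v) r.

Definition Inv (k : nat) (st : cstate V) : Prop :=
  [/\ (forall v t, st.1 v = Some t -> (t < k)%N /\ v \in ev t),
      (forall v, (st.1 v == None) = (st.2 v == None)),
      (forall r, \sum_(t in imgGt st r) cost t <= pot st r) &
      (forall (t : nat) r, (t < k)%N -> wsum beta (Ile st r :&: ev t) <= 2%:Q ^ r * cost t)].

Lemma wsum_ge0 (A : {set V}) : 0 <= wsum beta A.
Proof. by apply: sumr_ge0 => v _; exact: ltW. Qed.

Lemma wsum_sub (A B : {set V}) : A \subset B -> wsum beta A <= wsum beta B.
Proof.
move=> /subsetP AB; rewrite /wsum [X in _ <= X](bigID [in A]) /=.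
have -> : \sum_(i in B | i \in A) beta i = \sum_(i in A) beta i.
  by apply: eq_bigl => v; rewrite andb_idl //; exact: AB.
rewrite lerDl; apply: sumr_ge0 => v _; exact: ltW.
Qed.

Lemma efflt_le' (e : option int) l r : eff_lt e l -> l <= r -> eff_le e r.
Proof. case: e => [k|] //= h1 h2; exact: ltW (lt_le_trans h1 h2). Qed.

Lemma step_mono k st st' : cover_step ev cost beta k st st' ->
  forall v r, eff_le (st'.2 v) r -> eff_le (st.2 v) r.
Proof.
case=> [[T [l [[_ [_ [_ hT]]] [_ ->]]]] | [_ ->] //] v r /=.
case: ifP => // vT /= lr; exact: (efflt_le' (hT v vT) lr).
Qed.

Lemma lb_new k st st' r : (k < m)%N -> cover_step ev cost beta k st st' ->
  wsum beta (Ile st' r :&: ev k) <= 2%:Q ^ r * cost k.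
Proof.
move=> km hstep.
rewrite leNgt; apply/negP => hgt.
set S := Ile st' r :&: ev k in hgt *.
have ck := hc km.
have hci : 0 <= (cost k)^-1 by rewrite invr_ge0 ltW.
have hS0 : 0 < wsum beta S := lt_trans (mulr_gt0 (p2gt0 r) ck) hgt.
have [l hl] := ceil_lg_ex (divr_gt0 hS0 ck).
have rl : r < l.
  have h0 : 2%:Q ^ r < wsum beta S / cost k by rewrite ltr_pdivlMr.
  case: hl => _ h2; have := lt_le_trans h0 h2; by rewrite p2lt.
have Sne : S != set0.
  by apply/negP => /eqP S0; move: hS0; rewrite S0 /wsum big_set0 ltxx.
have hSv : forall v, v \in S -> eff_le (st.2 v) r.
  move=> v; rewrite inE => /andP [vI _]; move: vI; rewrite inE => vI.
  exact: (step_mono hstep vI).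
have Seff : effective ev cost beta st k S l.
  split => //; split; [exact: subsetIr | split => // v vS].
  exact: effle_lt (hSv v vS) rl.
case: hstep => [[T [lT [hT [hmax hst']]]] | [hno _]]; last exact: (hno S l Seff).
have hST := hmax S l Seff.
case: hT => [Tne [Tsub [hlT hTv]]].
have llT : l <= lT := lev_mono hl hlT (ler_wpM2r hci hST).
case: (boolP [disjoint S & T]) => [dis | /pred0Pn [v /andP [vS vT]]].
- set U := S :|: T.
  have hU : wsum beta S + wsum beta T <= wsum beta U.
    rewrite /wsum !(big_mkcond (fun v => v \in _)) -big_split.
    apply: ler_sum => v _; rewrite [v \in U]inE.
    case: (boolP (v \in S)) => vS; case: (boolP (v \in T)) => vT.
    + by move: (disjointFr dis vS); rewrite vT.
    + by rewrite /= ?addr0 ?add0r ?orbT ?(negbTE vS) ?(negbTE vT) /= ?lexx.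
    + by rewrite /= ?addr0 ?add0r ?orbT ?(negbTE vS) ?(negbTE vT) /= ?lexx.
    + by rewrite /= ?addr0 ?add0r ?orbT ?(negbTE vS) ?(negbTE vT) /= ?lexx.
  have hT0 := wsum_ge0 T.
  have hU0 : 0 < wsum beta U by lra.
  have [lU hlU] := ceil_lg_ex (divr_gt0 hU0 ck).
  have lU1 : l <= lU.
    apply: (lev_mono hl hlU (ler_wpM2r hci _)); lra.
  have lU2 : lT <= lU.
    apply: (lev_mono hlT hlU (ler_wpM2r hci _)); lra.
  have Ueff : effective ev cost beta st k U lU.
    split.
      case/set0Pn: Sne => w wS; apply/set0Pn; exists w; by rewrite inE wS.
    split; first by rewrite subUset subsetIr Tsub.
    split => // w; rewrite inE => /orP [wS | wT].
      exact: effle_lt (hSv w wS) (lt_le_trans rl lU1).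
    exact: efflt_le (hTv w wT) lU2.
  have := hmax U lU Ueff; lra.
- move: vS; rewrite /S hst' !inE /=; case: ifP => [_ |]; last by move: vT => /= ->.
  move=> /andP [hv _].
  by have := lt_le_trans rl llT; rewrite ltNge; move: hv => /= ->.
Qed.

Lemma inv_step k st st' : (k < m)%N -> Inv k st ->
  cover_step ev cost beta k st st' -> Inv k.+1 st'.
Proof.
move=> km [ha hb' hc' hd] hstep.
have hd' : forall (t : nat) r, (t < k.+1)%N ->
    wsum beta (Ile st' r :&: ev t) <= 2%:Q ^ r * cost t.
  move=> t r; rewrite ltnS leq_eqVlt => /orP [/eqP -> | tk]; first exact: lb_new km hstep.
  apply: le_trans (hd t r tk); apply: wsum_sub; apply: setSI.
  apply/subsetP => v; rewrite !inE; exact: step_mono hstep v r.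
case: hstep => [[T [l [[Tne [Tsub [hlT hTv]]] [hmax hst']]]] | [_ hst']]; last first.
  subst st'; split => //.
  by move=> v t /ha [tk vt]; split => //; exact: ltnW.
subst st'; split.
- move=> v t /=; case: ifP => vT.
    by case=> <-; split => //; exact: (subsetP Tsub).
  by move=> /ha [tk vt]; split => //; exact: ltnW.
- by move=> v /=; case: ifP => // _.
- move=> r.
  have c0 : forall t : 'I_m, 0 <= cost t := fun t => ltW (hc (ltn_ord t)).
  have h1 : \sum_(t in imgGt (cupdate st k T l) r) cost t <=
      \sum_(t in imgGt st r) cost t + (if r < l then cost k else 0).
    rewrite (big_mkcond (fun t => t \in imgGt (cupdate st k T l) r)).
    rewrite (big_mkcond (fun t => t \in imgGt st r)).
    have -> : (if r < l then cost k else 0) =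
        \sum_(t : 'I_m) (if (r < l) && (val t == k) then cost t else 0).
      case: ifP => rl /=; last by rewrite big1.
      rewrite (bigD1 (Ordinal km)) //= eqxx big1 ?addr0 // => t tne.
      case: ifP => // /eqP tk; exfalso; move/eqP: tne; apply; exact: val_inj.
    rewrite -big_split; apply: ler_sum => t _.
    case: ifP => ht; last first.
      by apply: addr_ge0; case: ifP => _ //; exact: c0.
    move: ht; rewrite inE => /existsP [v /andP [/eqP hv hgt]].
    case: (boolP (v \in T)) => vT; move: hv hgt; rewrite /= ?(negbTE vT) ?vT /= => hv hgt.
      case: hv => tk; rewrite -ltNge in hgt.
      rewrite hgt -tk eqxx /= lerDr; case: ifP => _ //; rewrite tk; exact: c0.
    have -> : t \in imgGt st r.
      by rewrite inE; apply/existsP; exists v; rewrite hv eqxx hgt.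
    by rewrite lerDl; case: ifP => _ //; exact: c0.
  have h2 : (if r < l then cost k else 0) <=
      (if r < l then 2%:Q ^ (1 - l) else 0) * wsum beta T.
    case: ifP => rl; last by rewrite mul0r.
    have := hlT.1; rewrite ltr_pdivlMr ?(hc km) // => h.
    have e : 2%:Q ^ (1 - l) * 2%:Q ^ (l - 1) = 1.
      by rewrite -p2D; have -> : 1 - l + (l - 1) = 0 by lia.
    have -> : cost k = 2%:Q ^ (1 - l) * (2%:Q ^ (l - 1) * cost k) by rewrite mulrA e mul1r.
    apply: ler_wpM2l; [exact: ltW (p2gt0 _) | exact: ltW h].
  have h3 : pot st r + (if r < l then 2%:Q ^ (1 - l) else 0) * wsum beta T <=
      pot (cupdate st k T l) r.
    have -> : (if r < l then 2%:Q ^ (1 - l) else 0) * wsum beta T =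
        \sum_v (if v \in T then (if r < l then 2%:Q ^ (1 - l) else 0) * beta v else 0).
      by rewrite /wsum mulr_sumr big_mkcond.
    rewrite /pot -big_split.
    apply: ler_sum => v _ /=; case: ifP => vT; last by rewrite addr0.
    have := gfun_step (st.2 v) r l (hTv v vT).
    rewrite (mulrC _ (beta v)) -mulrDr => h.
    apply: ler_wpM2l => //; exact: ltW (hb v).
  apply: le_trans h1 _; apply: le_trans _ h3; apply: lerD => //; exact: hc' r.
- exact: hd'.
Qed.

Lemma inv_reach k st : cover_reach m ev cost beta k st -> (k <= m)%N /\ Inv k st.
Proof.
elim => [|k0 st0 st1 _ [_ IH] km hs]; last by split => //; exact: inv_step IH hs.
split => //; split => //.
move=> r.
have -> : \sum_(t in imgGt (cinit V) r) cost t = 0.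
  by apply: big1 => t; rewrite inE => /existsP [v].
have -> : pot (cinit V) r = 0 by rewrite /pot big1 // => v _; rewrite mulr0.
by [].
Qed.

Lemma lb_opt k st (OPT : {set 'I_m}) r : Inv k st -> (m <= k)%N ->
  is_edge_cover ev OPT -> wsum beta (Ile st r) <= 2%:Q ^ r * ecost cost OPT.
Proof.
move=> [_ _ _ hd] mk hcov.
apply: (@le_trans _ _ (\sum_(t in OPT) wsum beta (Ile st r :&: ev t))); last first.
  rewrite /ecost mulr_sumr; apply: ler_sum => t _.
  apply: hd; exact: (leq_trans (ltn_ord t) mk).
have -> : \sum_(t in OPT) wsum beta (Ile st r :&: ev t) =
    \sum_(v in Ile st r) \sum_(t in OPT) (if v \in ev t then beta v else 0).
  rewrite exchange_big /=; apply: eq_bigr => t _.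
  rewrite /wsum big_mkcond [RHS]big_mkcond; apply: eq_bigr => v _.
  by rewrite inE; case: (v \in Ile st r); case: (v \in ev t).
rewrite /wsum; apply: ler_sum => v _.
have [t0 t0O vt0] := hcov v.
rewrite (bigD1 t0) //= vt0 lerDl; apply: sumr_ge0 => t _.
by case: ifP => // _; exact: ltW (hb v).
Qed.

Lemma wsum_setT' : wsum beta setT = \sum_v beta v.
Proof. by rewrite /wsum; apply: eq_bigl => v; rewrite in_setT. Qed.

Lemma ub_img k st r : Inv k st ->
  \sum_(t in imgGt st r) cost t <= 2%:Q ^ (1 - r) * wsum beta setT.
Proof.
move=> [_ _ hc' _]; apply: le_trans (hc' r) _.
rewrite wsum_setT' mulr_sumr /pot; apply: ler_sum => v _.
rewrite mulrC; apply: ler_wpM2r; [exact: ltW (hb v) | exact: gfun_le].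
Qed.

Lemma wsum_split (A : {set V}) : wsum beta setT = wsum beta A + wsum beta (~: A).
Proof. by rewrite /wsum (big_setID A) setTI setTD. Qed.

End Inv.

Set Implicit Arguments. Unset Strict Implicit.

Lemma min_inv_sqrt_ge0 eps n : 0 <= eps -> 0 <= min_inv_sqrt eps n.
Proof.
move=> e0; rewrite /min_inv_sqrt; case: ifP => _; first exact: sqrtr_ge0.
by rewrite le_min sqrtr_ge0 invr_ge0 ler0q e0.
Qed.

Lemma wsum1 (V : finType) (A : {set V}) : wsum (fun _ => 1) A = #|A|%:R.
Proof. by rewrite /wsum sumr_const. Qed.

Lemma aux5 (R : fieldType) (e o : R) : e != 0 -> e * (5%:R * e^-1 * o) = 5%:R * o.
Proof. by move=> h; rewrite mulrA mulrCA divff // mulr1. Qed.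

Lemma aux_pq (R : comRingType) (p q s o : R) : p * (s * (q * o)) = (p * q) * (s * o).
Proof. ring. Qed.

Lemma aux_45 (R : comRingType) (s o : R) : 4%:R * (s * o) + s * o = 5%:R * s * o.
Proof. ring. Qed.

Theorem theorem12 :
  exists C : realalg, 0 < C /\
  forall (V : finType) (b : V -> rat) (m : nat) (ev : nat -> {set V})
         (cost : nat -> rat),
    (forall v, 0 < b v) ->
    (forall t, (t < m)%N -> ev t != set0) ->
    (forall t, (t < m)%N -> 0 < cost t) ->
    (forall v : V, exists2 t, (t < m)%N & v \in ev t) ->
  forall OPT : {set 'I_m}, is_min_edge_cover ev cost OPT ->
  forall eps : rat, 0 <= eps < 1 ->
  forall (st1 st2 : cstate V) (emin : V -> option nat),
    cover_run m ev cost b st1 ->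
    cover_run m ev cost (fun _ => 1) st2 ->
    emin_spec m ev cost emin ->
  forall chi : V -> option nat,
    sssc_output b eps st1 st2 emin chi ->
    is_cover_cert m ev b (1 - eps) chi /\
    ratr (ecost cost (img m chi)) <= C * min_inv_sqrt eps #|V| * ratr (ecost cost OPT).
Proof.
exists 5%:R; split; first by rewrite ltr0n.
move=> V b m ev cost hb hne hc hcov OPT [hOPT _] eps /andP [e0 e1]
  st1 st2 emin r1 r2 hemin chi hout.
have [_ I1] := inv_reach hb hc r1.
have hb1 : forall v : V, (0:rat) < (fun _ => 1) v := fun _ => ltr01.
have [_ I2] := inv_reach hb1 hc r2.
have I1' := I1; case: I1' => [a1 bb1 _ _].
have I2' := I2; case: I2' => [a2 bb2 _ _].
have c0 : forall t : 'I_m, 0 <= cost t := fun t => ltW (hc _ (ltn_ord t)).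
have OPT0 : 0 <= ecost cost OPT by apply: sumr_ge0 => t _; exact: c0.
have OPT0' : 0 <= ratr (ecost cost OPT) :> realalg by rewrite ler0q.
have W0 := wsum_ge0 hb setT.
rewrite /sssc_output in hout.
case: ifP hout => hcase [rs [hrs1 [hrs2 hchi]]]; subst chi.
-
  split.
    split.
      by move=> v t /=; case: ifP => // _; exact: a1.
    have hdom : ~: Ile st1 rs \subset
        dom (fun v => if v \in Ile st1 rs then None else st1.1 v).
      apply/subsetP => v; rewrite !inE => hv; rewrite (negbTE hv).
      by rewrite bb1; move: hv; case: (st1.2 v).
    have hsplit := wsum_split b (Ile st1 rs); have hsub := wsum_sub hb hdom.
    rewrite mulrBl mul1r; apply: le_trans hsub; rewrite lerBlDr {1}hsplit addrC lerD2l.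
    exact: hrs1.
  case: (posnP #|V|) => [n0 | npos].
    have -> : img m (fun v => if v \in Ile st1 rs then None else st1.1 v) = set0.
      apply/setP => t; rewrite !inE; apply: negbTE; apply/existsPn => v.
      have : (0 < #|V|)%N by apply/card_gt0P; exists v.
      by rewrite n0.
    rewrite /ecost big_set0 rmorph0; apply: mulr_ge0 => //.
    apply: mulr_ge0; [by rewrite ler0n | exact: min_inv_sqrt_ge0].
  set sn := Num.sqrt (#|V|%:R : realalg).
  have sn0 : 0 < sn by rewrite sqrtr_gt0 ltr0n.
  have hcase' : sn^-1 <= ratr eps by rewrite -div1r.
  have ep' : 0 < ratr eps :> realalg by apply: lt_le_trans hcase'; rewrite invr_gt0.
  have ep : 0 < eps by rewrite -(ltr0q realalg).
  set chi := (fun v => if v \in Ile st1 rs then None else st1.1 v).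
  have hcost : ecost cost (img m chi) <= \sum_(t in imgGt m st1 rs) cost t.
    rewrite /ecost (big_mkcond (fun t => t \in img m chi)).
    rewrite (big_mkcond (fun t => t \in imgGt m st1 rs)).
    apply: ler_sum => t _; case: ifP => ht; last by case: ifP => _ //; exact: c0.
    move: ht; rewrite inE => /existsP [v /eqP]; rewrite /chi.
    case: ifP => // vI hv.
    have -> // : t \in imgGt m st1 rs.
    by rewrite inE; apply/existsP; exists v; rewrite hv eqxx; move: vI; rewrite inE => ->.
  have hub := ub_img hb rs I1.
  have hmax : eps * wsum b setT < wsum b (Ile st1 (rs + 1)).
    by rewrite ltNge; apply/negP => /hrs2 h; clear -h; lia.
  have hlb := lb_opt hb (rs + 1) I1 (leqnn m) hOPT.
  have Ppos := p2gt0 (1 - rs).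
  have PQ : 2%:Q ^ (1 - rs) * 2%:Q ^ (rs + 1) = 4.
    rewrite -p2D; have -> : 1 - rs + (rs + 1) = 2%:Z by clear; lia.
    by rewrite p2_nat.
  have hrat : eps * ecost cost (img m chi) <= 4 * ecost cost OPT.
    have s1 := le_trans hcost hub.
    apply: le_trans (ler_wpM2l e0 s1) _; rewrite mulrCA.
    apply: le_trans (ler_wpM2l (ltW Ppos) (ltW (lt_le_trans hmax hlb))) _.
    by rewrite mulrA PQ.
  have hreal : ratr eps * ratr (ecost cost (img m chi)) <= 4 * ratr (ecost cost OPT) :> realalg.
    by move: hrat; rewrite -(ler_rat realalg) !rmorphM rmorph_nat.
  rewrite /min_inv_sqrt (negbTE (lt0r_neq0 ep)) -/sn.
  have -> : Num.min (ratr eps)^-1 sn = (ratr eps)^-1.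
    apply: min_l; rewrite -[sn]invrK lef_pV2 ?posrE ?invr_gt0 //.
  rewrite -(ler_pM2l ep').
  have -> : ratr eps * (5%:R * (ratr eps)^-1 * ratr (ecost cost OPT)) =
      5%:R * ratr (ecost cost OPT) :> realalg.
    exact: aux5 (lt0r_neq0 ep').
  apply: le_trans hreal _; apply: ler_wpM2r => //; rewrite ler_nat; exact: isT.
- have npos : (0 < #|V|)%N.
    case: (posnP #|V|) => [n0|] //; exfalso; move: hcase.
    by rewrite /sqrtn n0 sqrtr0 invr0 mulr0 ler0q e0.
  rewrite /sqrtn in hrs1 hrs2 hcase.
  set sn := Num.sqrt (#|V|%:R : realalg) in hrs1 hrs2 hcase *.
  have sn0 : 0 < sn by rewrite sqrtr_gt0 ltr0n.
  have hlt : ratr eps < sn^-1.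
    by move: hcase; rewrite div1r => /negbT; rewrite -ltNge.
  set chi := (fun v => if v \in Ile st2 rs then emin v else st2.1 v).
  have hsome : forall v, chi v != None.
    move=> v; rewrite /chi; case: ifP => vI.
      by have [t0 [-> _]] := hemin v.
    by rewrite bb2; move: vI; rewrite inE; case: (st2.2 v).
  split.
    split.
      move=> v t; rewrite /chi; case: ifP => vI; last exact: a2.
      by have [t0 [-> [t0m [vt0 _]]]] := hemin v; case=> <-.
    have hd : [set: V] \subset dom chi by apply/subsetP => v _; rewrite inE hsome.
    apply: le_trans (wsum_sub hb hd); rewrite mulrBl mul1r gerBl.
    exact: mulr_ge0 e0 W0.
  have hmin : min_inv_sqrt eps #|V| = sn.
    rewrite /min_inv_sqrt; case: ifP => // en0.
    have ep : 0 < ratr eps :> realalg by rewrite ltr0q lt0r en0 e0.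
    rewrite -/sn; apply: min_r; rewrite -[sn]invrK lef_pV2 ?posrE ?invr_gt0 //; exact: ltW hlt.
  rewrite hmin.
  pose ce v := \sum_(t : 'I_m) (if emin v == Some (val t) then cost t else 0).
  have hdec : ecost cost (img m chi) <=
      \sum_(t in imgGt m st2 rs) cost t + \sum_(v in Ile st2 rs) ce v.
    rewrite /ecost (big_mkcond (fun t => t \in img m chi)).
    rewrite (big_mkcond (fun t => t \in imgGt m st2 rs)).
    rewrite /ce exchange_big /= -big_split /=.
    apply: ler_sum => t _; case: ifP => ht; last first.
      apply: addr_ge0; first by case: ifP => _ //; exact: c0.
      by apply: sumr_ge0 => v _; case: ifP => _ //; exact: c0.
    move: ht; rewrite inE => /existsP [v /eqP]; rewrite /chi; case: ifP => vI hv.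
      rewrite (bigD1 v) //= hv eqxx addrCA lerDl; apply: addr_ge0.
        by case: ifP => _ //; exact: c0.
      by apply: sumr_ge0 => w _; case: ifP => _ //; exact: c0.
    have -> : t \in imgGt m st2 rs.
      by rewrite inE; apply/existsP; exists v; rewrite hv eqxx; move: vI; rewrite inE => ->.
    rewrite lerDl; by apply: sumr_ge0 => w _; case: ifP => _ //; exact: c0.
  have hce : forall v, ce v <= ecost cost OPT.
    move=> v; have [t0 [e [t0m [vt0 hm]]]] := hemin v.
    have [t1 t1O vt1] := hOPT v.
    have -> : ce v = cost t0.
      rewrite /ce e (bigD1 (Ordinal t0m)) //= eqxx big1 ?addr0 // => t tne.
      case: ifP => // /eqP [tt]; exfalso; move/eqP: tne; apply; apply: val_inj => /=.
      by rewrite tt.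
    apply: le_trans (hm _ (ltn_ord t1) vt1) _.
    rewrite /ecost (bigD1 t1) //= lerDl; apply: sumr_ge0 => t _; exact: c0.
  have hB : \sum_(v in Ile st2 rs) ce v <= #|Ile st2 rs|%:R * ecost cost OPT.
    apply: le_trans (ler_sum _ (fun v _ => hce v)) _; by rewrite sumr_const mulr_natl.
  have hG := ub_img hb1 rs I2.
  rewrite wsum1 cardsT in hG.
  have hmax : sn < #|Ile st2 (rs + 1)|%:R.
    by rewrite ltNge; apply/negP => /hrs2 h; clear -h; lia.
  have hlb := lb_opt hb1 (rs + 1) I2 (leqnn m) hOPT.
  rewrite wsum1 in hlb.
  have PQ : 2%:Q ^ (1 - rs) * 2%:Q ^ (rs + 1) = 4.
    rewrite -p2D; have -> : 1 - rs + (rs + 1) = 2%:Z by clear; lia.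
    by rewrite p2_nat.
  set p := ratr (2%:Q ^ (1 - rs)) : realalg.
  set q := ratr (2%:Q ^ (rs + 1)) : realalg.
  set o := ratr (ecost cost OPT) : realalg.
  have p0 : 0 <= p by rewrite ler0q; exact: ltW (p2gt0 _).
  have pq : p * q = 4 by rewrite -rmorphM PQ rmorph_nat.
  have nn : (#|V|%:R : realalg) = sn * sn by rewrite -expr2 sqr_sqrtr // ler0n.
  have hG' : ratr (\sum_(t in imgGt m st2 rs) cost t) <= p * (sn * sn).
    by rewrite -nn; move: hG; rewrite -(ler_rat realalg) rmorphM rmorph_nat.
  have hB' : ratr (\sum_(v in Ile st2 rs) ce v) <= sn * o.
    apply: le_trans (ler_wpM2r OPT0' hrs1).
    by move: hB; rewrite -(ler_rat realalg) rmorphM rmorph_nat.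
  have hlb' : (#|Ile st2 (rs + 1)|%:R : realalg) <= q * o.
    by move: hlb; rewrite -(ler_rat realalg) rmorphM rmorph_nat.
  have hs : sn <= q * o := ltW (lt_le_trans hmax hlb').
  have hG'' : ratr (\sum_(t in imgGt m st2 rs) cost t) <= 4 * (sn * o).
    apply: le_trans hG' _; rewrite -pq -(aux_pq p q sn o).
    apply: ler_wpM2l => //; apply: ler_wpM2l => //; exact: ltW sn0.
  have hdec' := hdec; rewrite -(ler_rat realalg) rmorphD in hdec'.
  apply: le_trans hdec' _; rewrite -aux_45; exact: lerD hG'' hB'.
Qed.
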